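(* There exist a family $\{(s^\xi_n)_{n\in\mathbb N}:\xi<2^\omega\}$ of sequences of reals in $[0,1]$ and a family $\{r_\xi:\xi<2^\omega\}$ of pairwise distinct reals in $[0,1]$ such that: (1) for each $\xi<2^\omega$ the sequence $(s^\xi_n)_{n\in\mathbb N}$ converges to $r_\xi$; (2) for every uncountable $X\subseteq[0,1]$ there is $\xi<2^\omega$ with $\{s^\xi_n:n\in\mathbb N\}\subseteq X$. *)

(* Defs.v *)
From Stdlib Require Import Reals.
Open Scope R_scope.

Definition continuum : Type := nat -> bool.

Definition countable_set (X : R -> Prop) : Prop :=
  exists f : nat -> R, forall x, X x -> exists n, f n = x.

Definition uncountable_set (X : R -> Prop) : Prop := ~ countable_set X.

(* Main.v *)
Require Import Defs.
From Stdlib Require Import Reals Lra Lia Inverse_Image ClassicalEpsilon Cantor.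
From mathcomp Require Import ssreflect ssrbool eqtype boolp wochoice.
Set Bullet Behavior "Strict Subproofs".
Open Scope R_scope.

Lemma W_wo : exists lt : continuum -> continuum -> Prop,
  well_founded lt /\ (forall x y, lt x y \/ x = y \/ lt y x).
Proof.
have [R HR] := well_ordering_principle (nat -> bool).
have Hne2 : forall x y : nat -> bool, nonempty (pred2 x y) by move=> x y; exists x; rewrite inE eqxx.
have Htot : forall x y, R x y \/ R y x.
  move=> x y. have [z [[Hz Hmin] _]] := HR (pred2 x y) (Hne2 x y).
  move: Hz Hmin; rewrite inE => /orP [/eqP->|/eqP->] Hmin;
   [left|right]; apply: Hmin; by rewrite inE eqxx ?orbT.
have Hanti : forall x y, R x y -> R y x -> x = y.
  move=> x y Hxy Hyx. have [z [_ Hu]] := HR (pred2 x y) (Hne2 x y).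
  have Ex := Hu x. have Ey := Hu y.
  have Rxx : R x x by case: (Htot x x).
  have Ryy : R y y by case: (Htot y y).
  rewrite -Ex; last first.
    split; first by rewrite inE eqxx.
    by move=> w; rewrite inE => /orP [/eqP->|/eqP->].
  rewrite Ey //. split; first by rewrite inE eqxx orbT.
  by move=> w; rewrite inE => /orP [/eqP->|/eqP->].
exists (fun x y => R x y /\ x <> y). split.
- move=> x. apply: Classical_Prop.NNPP => Hx.
  have Hne : nonempty [pred w | `[< ~ Acc (fun x y => R x y /\ x <> y) w >]].
    by exists x; rewrite inE; apply/asboolP.
  have [z [[Hz Hmin] _]] := HR _ Hne.
  move: Hz; rewrite inE => /asboolP; apply. constructor => y [Hyz Hne'].
  apply: Classical_Prop.NNPP => Hy. apply: Hne'. apply: Hanti => //.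
  apply: Hmin. rewrite inE. by apply/asboolP.
- move=> x y. case: (Classical_Prop.classic (x = y)) => [->|Hne]; first by right; left.
  case: (Htot x y) => H; [left|right;right]; split => //. by move=> E; apply: Hne.
Qed.

Definition injW (g : continuum -> continuum) := forall a b, g a = g b -> a = b.

Lemma wf_min (A : Type) (lt : A -> A -> Prop) (P : A -> Prop) :
  well_founded lt -> (exists z, P z) -> exists z, P z /\ forall y, lt y z -> ~ P y.
Proof.
move=> Hwf [z Hz]. apply: Classical_Prop.NNPP => Hn. move: Hz.
elim/(well_founded_ind Hwf): z => z IH Hz. apply: Hn. exists z; split; first done.
move=> y Hy Py. exact: (IH y Hy Py).
Qed.

Lemma W_ord : exists lt : continuum -> continuum -> Prop,
  well_founded lt /\ (forall x y, lt x y \/ x = y \/ lt y x) /\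
  (forall x g, injW g -> exists w, ~ lt (g w) x).
Proof.
have [lt0 [Hwf Htri]] := W_wo.
pose P z := exists f, injW f /\ forall w, lt0 (f w) z.
case: (Classical_Prop.classic (exists z, P z)) => HP; last first.
  exists lt0; split => //; split => // x g Hg.
  apply: Classical_Prop.NNPP => Hn. apply: HP. exists x, g; split => // w.
  apply: Classical_Prop.NNPP => Hw. apply: Hn. by exists w.
have [z [[f [Hf Hfz]] Hmin]] := @wf_min _ _ P Hwf HP.
exists (fun x y => lt0 (f x) (f y)); split; first exact: wf_inverse_image.
split.
  move=> x y. case: (Htri (f x) (f y)) => [H|[H|H]]; [left|right;left|right;right] => //.
  exact: Hf.
move=> x g Hg. apply: Classical_Prop.NNPP => Hn. apply: (Hmin (f x) (Hfz x)).
exists (fun w => f (g w)); split.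
  by move=> a b /Hf /Hg.
move=> w. apply: Classical_Prop.NNPP => Hw. apply: Hn. by exists w.
Qed.

Lemma cover (lt : continuum -> continuum -> Prop)
  (Hord : forall x g, injW g -> exists w, ~ lt (g w) x)
  (x : continuum) (r : continuum -> R) (phi : continuum -> R) :
  (forall a b, phi a = phi b -> a = b) ->
  exists w, forall eta, lt eta x -> r eta <> phi w.
Proof.
move=> Hphi. apply: Classical_Prop.NNPP => Hn.
have H : forall w, exists eta, lt eta x /\ r eta = phi w.
  move=> w. apply: Classical_Prop.NNPP => Hw. apply: Hn. exists w => eta Heta E.
  apply: Hw. by exists eta.
pose g w := proj1_sig (cid (H w)).
have Hg : forall w, lt (g w) x /\ r (g w) = phi w.
  move=> w. exact: (proj2_sig (cid (H w))).
have Hinj : injW g.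
  move=> a b E. apply: Hphi. by rewrite -(proj2 (Hg a)) -(proj2 (Hg b)) E.
have [w Hw] := Hord x g Hinj.
exact: Hw (proj1 (Hg w)).
Qed.

Definition qd (k : nat) : R :=
  let (a, b) := Cantor.of_nat k in let (c, d) := Cantor.of_nat a in
  (INR c - INR d) / INR (S b).

Lemma qd_dense x y : x < y -> exists k, x < qd k < y.
Proof.
move=> Hxy. have [N [HN HN0]] := archimed_cor1 (y - x) ltac:(lra).
have Hn : 0 < INR N by apply: lt_0_INR.
set z := up (x * INR N). have [Hz1 Hz2] := archimed (x * INR N).
set c := Z.to_nat z. set d := Z.to_nat (- z).
have Ez : IZR z = INR c - INR d.
  rewrite !INR_IZR_INZ -minus_IZR. f_equal. rewrite /c /d. lia.
exists (Cantor.to_nat (Cantor.to_nat (c, d), Nat.pred N)).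
rewrite /qd Cantor.cancel_of_to Cantor.cancel_of_to -Ez.
have -> : S (Nat.pred N) = N by lia.
rewrite -/z in Hz1 Hz2.
have Hinv : / INR N * INR N = 1 by (field; lra).
have Hw : IZR z / INR N * INR N = IZR z by (field; lra).
split.
- apply: (Rmult_lt_reg_r (INR N)) => //. rewrite Hw. lra.
- apply: (Rmult_lt_reg_r (INR N)) => //. rewrite Hw. nra.
Qed.

Definition bits (x : R) (k : nat) : bool := if Rlt_dec (qd k) x then true else false.

Definition iota (t : nat -> R) : continuum :=
  fun n => let (m, k) := Cantor.of_nat n in bits (t m) k.

Lemma iota_inj t1 t2 : iota t1 = iota t2 -> t1 = t2.
Proof.
move=> E. apply: functional_extensionality_dep => m.
have key : forall k, bits (t1 m) k = bits (t2 m) k.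
  move=> k. have := f_equal (fun f => f (Cantor.to_nat (m, k))) E.
  by rewrite /iota Cantor.cancel_of_to.
case: (Rtotal_order (t1 m) (t2 m)) => [H|[H|H]] //.
- have [k [Hk1 Hk2]] := qd_dense _ _ H. have := key k. rewrite /bits.
  case: (Rlt_dec (qd k) (t1 m)) => ? ; first lra.
  case: (Rlt_dec (qd k) (t2 m)) => ? //; lra.
- have [k [Hk1 Hk2]] := qd_dense _ _ H. have := key k. rewrite /bits.
  case: (Rlt_dec (qd k) (t2 m)) => ? ; first lra.
  case: (Rlt_dec (qd k) (t1 m)) => ? //; lra.
Qed.

Definition Tsk (w : continuum) : nat -> R :=
  ClassicalEpsilon.epsilon (inhabits (fun _ => 0)) (fun t => iota t = w).

Lemma Tsk_surj t : exists w, Tsk w = t.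
Proof.
exists (iota t). apply: iota_inj. rewrite /Tsk.
apply: (ClassicalEpsilon.epsilon_spec (inhabits (fun _ => 0)) (fun t0 => iota t0 = iota t)).
by exists t.
Qed.

Set Implicit Arguments. Unset Strict Implicit.

Definition split_spec (G : R -> R -> Prop) (p p1 p2 : R * R) : Prop :=
  fst p <= fst p1 /\ fst p1 <= snd p1 /\ snd p1 < fst p2 /\ fst p2 <= snd p2 /\
  snd p2 <= snd p /\ snd p1 - fst p1 <= (snd p - fst p) / 2 /\
  snd p2 - fst p2 <= (snd p - fst p) / 2 /\ G (fst p1) (snd p1) /\ G (fst p2) (snd p2).

Definition choose_split (G : R -> R -> Prop) (p : R * R) : (R * R) * (R * R) :=
  ClassicalEpsilon.epsilon (inhabits ((0,0),(0,0)))
    (fun q => (exists q', split_spec G p (fst q') (snd q')) -> split_spec G p (fst q) (snd q)).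

Definition child G p (c : bool) : R * R :=
  if c then snd (choose_split G p) else fst (choose_split G p).

Fixpoint J G (p0 : R * R) (n : nat) (b : continuum) : R * R :=
  match n with O => p0 | S n => child G (J G p0 n b) (b n) end.

Definition good_split (G : R -> R -> Prop) :=
  forall p, G (fst p) (snd p) -> exists p1 p2, split_spec G p p1 p2.

Lemma choose_split_spec G p : good_split G -> G (fst p) (snd p) ->
  split_spec G p (fst (choose_split G p)) (snd (choose_split G p)).
Proof.
move=> HG Hp. rewrite /choose_split.
apply: (ClassicalEpsilon.epsilon_spec (inhabits ((0,0),(0,0)))
   (fun q => (exists q', split_spec G p (fst q') (snd q')) -> split_spec G p (fst q) (snd q))).
- have [p1 [p2 H]] := HG p Hp. exists (p1, p2) => _. exact: H.
- have [p1 [p2 H]] := HG p Hp. by exists (p1, p2).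
Qed.

Lemma J_inv G p0 (HG : good_split G) (H0 : G (fst p0) (snd p0)) (Hle0 : fst p0 <= snd p0) n b :
  G (fst (J G p0 n b)) (snd (J G p0 n b)) /\ fst (J G p0 n b) <= snd (J G p0 n b) /\
  snd (J G p0 n b) - fst (J G p0 n b) <= (snd p0 - fst p0) * (/2) ^ n.
Proof.
elim: n => [|n [IHG [IHle IHlen]]] /=; first by split => //; split; lra.
have := choose_split_spec HG IHG. rewrite /child.
case: (choose_split G (J G p0 n b)) => p1 p2 /=.
move=> [H1 [H2 [H3 [H4 [H5 [H6 [H7 [H8 H9]]]]]]]].
case: (b n) => /=; (split; [done|split; [lra|]]); lra.
Qed.

Lemma J_step G p0 (HG : good_split G) (H0 : G (fst p0) (snd p0)) (Hle0 : fst p0 <= snd p0) n b :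
  fst (J G p0 n b) <= fst (J G p0 (S n) b) /\ snd (J G p0 (S n) b) <= snd (J G p0 n b).
Proof.
have [IHG _] := J_inv HG H0 Hle0 n b.
have := choose_split_spec HG IHG. rewrite /= /child.
case: (choose_split G (J G p0 n b)) => p1 p2 /=.
move=> [H1 [H2 [H3 [H4 [H5 [H6 [H7 [H8 H9]]]]]]]].
case: (b n) => /=; lra.
Qed.

Lemma J_mono G p0 (HG : good_split G) (H0 : G (fst p0) (snd p0)) (Hle0 : fst p0 <= snd p0) n m b :
  (n <= m)%nat -> fst (J G p0 n b) <= fst (J G p0 m b) /\ snd (J G p0 m b) <= snd (J G p0 n b).
Proof.
elim: m => [|m IH] Hnm.
- have -> : n = O by lia. lra.
- case: (Nat.eq_dec n (S m)) => [->|Hne]; first lra.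
  have [A B] := IH ltac:(lia). have [C D] := J_step HG H0 Hle0 m b. lra.
Qed.

Lemma J_cross G p0 (HG : good_split G) (H0 : G (fst p0) (snd p0)) (Hle0 : fst p0 <= snd p0) n m b :
  fst (J G p0 m b) <= snd (J G p0 n b).
Proof.
case: (Nat.le_ge_cases n m) => H.
- have [A B] := J_mono HG H0 Hle0 b H. have [_ [C _]] := J_inv HG H0 Hle0 m b. lra.
- have [A B] := J_mono HG H0 Hle0 b H. have [_ [C _]] := J_inv HG H0 Hle0 n b. lra.
Qed.

Definition phiJ G p0 (b : continuum) : R :=
  ClassicalEpsilon.epsilon (inhabits 0)
    (fun x => forall n, fst (J G p0 n b) <= x <= snd (J G p0 n b)).

Lemma phiJ_in G p0 (HG : good_split G) (H0 : G (fst p0) (snd p0)) (Hle0 : fst p0 <= snd p0) b n :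
  fst (J G p0 n b) <= phiJ G p0 b <= snd (J G p0 n b).
Proof.
move: n. rewrite /phiJ.
apply: (ClassicalEpsilon.epsilon_spec (inhabits 0) (fun x => forall n, fst (J G p0 n b) <= x <= snd (J G p0 n b))).
pose E := fun x => exists n, x = fst (J G p0 n b).
have HE : bound E.
  exists (snd p0) => x [n ->]. have := J_cross HG H0 Hle0 O n b. by [].
have [m [Hub Hlub]] := completeness E HE (ex_intro _ (fst p0) (ex_intro _ O Logic.eq_refl)).
exists m => n; split.
- apply: Hub. by exists n.
- apply: Hlub => x [k ->]. exact: J_cross.
Qed.

Lemma phiJ_cv G p0 (HG : good_split G) (H0 : G (fst p0) (snd p0)) (Hle0 : fst p0 <= snd p0) b
  (v : nat -> R) : (forall n, fst (J G p0 n b) <= v n <= snd (J G p0 n b)) -> Un_cv v (phiJ G p0 b).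
Proof.
move=> Hv eps Heps.
set L := snd p0 - fst p0.
have HL : 0 <= L by rewrite /L; lra.
have [N HN] := pow_lt_1_zero (/2) ltac:(rewrite Rabs_right; lra) (eps / (L + 1)) ltac:(apply: Rdiv_lt_0_compat; lra).
exists N => n Hn. have := HN n Hn. rewrite Rabs_right; last by apply: Rle_ge; apply: pow_le; lra.
move=> Hp.
have Hp' : (/2) ^ n * (L + 1) < eps.
  have : eps / (L + 1) * (L + 1) = eps by field; lra.
  move=> E. rewrite -E. apply: Rmult_lt_compat_r; lra.
have Hp0 : 0 <= (/2) ^ n by apply: pow_le; lra.
have [_ [_ Hlen]] := J_inv HG H0 Hle0 n b.
have := phiJ_in HG H0 Hle0 b n. have := Hv n. rewrite -/L in Hlen.
unfold Rdist. move=> H1 H2. unfold Rabs. case: (Rcase_abs _) => _; nra.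
Qed.

Lemma J_dep G p0 n (b b' : continuum) :
  (forall i, (i < n)%nat -> b i = b' i) -> J G p0 n b = J G p0 n b'.
Proof.
elim: n => [|n IH] H //=. rewrite IH; last by move=> i Hi; apply: H; lia.
by rewrite H //; lia.
Qed.

Lemma phiJ_inj G p0 (HG : good_split G) (H0 : G (fst p0) (snd p0)) (Hle0 : fst p0 <= snd p0) b b' :
  phiJ G p0 b = phiJ G p0 b' -> b = b'.
Proof.
move=> E. apply: Classical_Prop.NNPP => Hne.
have Hex : exists i, b i <> b' i.
  apply: Classical_Prop.NNPP => Hn. apply: Hne. apply: functional_extensionality_dep => i.
  apply: Classical_Prop.NNPP => Hi. apply: Hn. by exists i.
have [i [Hi Hmin]] := @wf_min _ lt (fun i => b i <> b' i) Wf_nat.lt_wf Hex.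
have HJ : J G p0 i b = J G p0 i b'.
  apply: J_dep => k Hk. apply: Classical_Prop.NNPP. exact: Hmin.
have [IG _] := J_inv HG H0 Hle0 i b.
have := choose_split_spec HG IG.
have A := phiJ_in HG H0 Hle0 b (S i). have B := phiJ_in HG H0 Hle0 b' (S i).
move: A B. rewrite /= /child -HJ.
case: (choose_split G (J G p0 i b)) => p1 p2 /=.
move=> A B [H1 [H2 [H3 [H4 [H5 [H6 [H7 [H8 H9]]]]]]]].
move: Hi A B. case: (b i); case: (b' i) => //= _; lra.
Qed.

Lemma cnt_sub (A B : R -> Prop) : (forall x, A x -> B x) -> countable_set B -> countable_set A.
Proof. move=> H [f Hf]. exists f => x /H. exact: Hf. Qed.

Lemma cnt_empty (A : R -> Prop) : (forall x, ~ A x) -> countable_set A.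
Proof. move=> H. exists (fun _ => 0) => x /H []. Qed.

Lemma cnt_single a : countable_set (fun x => x = a).
Proof. exists (fun _ => a) => x ->. by exists O. Qed.

Lemma cnt_bigunion (A : nat -> R -> Prop) : (forall n, countable_set (A n)) ->
  countable_set (fun x => exists n, A n x).
Proof.
move=> H. pose fs n := proj1_sig (cid (H n)).
have Hfs : forall n x, A n x -> exists k, fs n k = x.
  move=> n. exact: (proj2_sig (cid (H n))).
exists (fun m => let (n, k) := Cantor.of_nat m in fs n k).
move=> x [n /Hfs [k Hk]]. exists (Cantor.to_nat (n, k)). by rewrite Cantor.cancel_of_to.
Qed.

Lemma cnt_union (A B : R -> Prop) : countable_set A -> countable_set B ->
  countable_set (fun x => A x \/ B x).
Proof.
move=> HA HB.
apply: (@cnt_sub _ (fun x => exists n, (if Nat.eqb n 0 then A else B) x)).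
  move=> x [Hx|Hx]; [exists O|exists 1%nat]; done.
apply: cnt_bigunion => n. by case: (Nat.eqb n 0).
Qed.

Lemma cnt_neg (A : R -> Prop) : countable_set A -> countable_set (fun y => A (- y)).
Proof.
move=> [f Hf]. exists (fun n => - f n) => x /Hf [n Hn]. exists n. rewrite Hn. ring.
Qed.

Lemma cnt_neg' (A : R -> Prop) : countable_set (fun y => A (- y)) -> countable_set A.
Proof.
move=> /cnt_neg H. apply: (cnt_sub _ H) => x Hx /=. by rewrite Ropp_involutive.
Qed.

Lemma left_part (Y : R -> Prop) l u : (forall y, Y y -> l <= y <= u) -> uncountable_set Y ->
  exists m, countable_set (fun y => Y y /\ y < m) /\
            forall a, m < a -> uncountable_set (fun y => Y y /\ y < a).
Proof.
move=> HY HunY.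
pose Sp a := countable_set (fun y => Y y /\ y < a).
have HSb : forall a, Sp a -> a <= u.
  move=> a Ha. apply: Rnot_lt_le => Hua. apply: HunY. apply: (cnt_sub _ Ha) => y Hy.
  split => //. have := HY y Hy. lra.
have HSl : Sp l by apply: cnt_empty => y [/HY Hy Hyl]; lra.
have [m [Hub Hlub]] := completeness Sp (ex_intro _ u HSb) (ex_intro _ l HSl).
exists m; split.
- apply: (@cnt_sub _ (fun y => exists n, Y y /\ y < m - / INR (S n))).
  + move=> y [Hy Hym]. have [N [HN HN0]] := archimed_cor1 (m - y) ltac:(lra).
    exists (Nat.pred N). have -> : S (Nat.pred N) = N by lia. split => //; lra.
  + apply: cnt_bigunion => n.
    have Hpos : 0 < / INR (S n) by apply: Rinv_0_lt_compat; apply: lt_0_INR; lia.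
    have [a [Sa Ha]] : exists a, Sp a /\ m - / INR (S n) < a.
      apply: Classical_Prop.NNPP => Hn.
      have : m <= m - / INR (S n).
        apply: Hlub => a Sa. apply: Rnot_lt_le => Ha. apply: Hn. by exists a.
      lra.
    apply: (cnt_sub _ Sa) => y [Hy Hya]. split => //; lra.
- move=> a Hma Ha. have := Hub a Ha. lra.
Qed.

Definition GX (X : R -> Prop) (l u : R) : Prop :=
  l <= u /\ uncountable_set (fun x => X x /\ l <= x <= u).

Lemma GX_halve X l u : GX X l u -> exists l' u', l <= l' /\ u' <= u /\ u' - l' <= (u - l) / 2 /\ GX X l' u'.
Proof.
move=> [Hlu Hun]. set m := (l + u) / 2.
case: (Classical_Prop.classic (countable_set (fun x => X x /\ l <= x <= m))) => H1.
- case: (Classical_Prop.classic (countable_set (fun x => X x /\ m <= x <= u))) => H2.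
  + exfalso. apply: Hun. apply: (cnt_sub _ (cnt_union H1 H2)) => x [Hx Hb].
    case: (Rle_lt_dec x m) => ?; [left|right]; split => //; lra.
  + exists m, u. split; first (rewrite /m; lra). split; first lra. split; first (rewrite /m; lra).
    split => //. rewrite /m; lra.
- exists l, m. split; first lra. split; first (rewrite /m; lra). split; first (rewrite /m; lra).
  split => //. rewrite /m; lra.
Qed.

Lemma GX_sep X l u : GX X l u -> exists a b, a < b /\ GX X l a /\ GX X b u.
Proof.
move=> [Hlu Hun]. set Y := fun x => X x /\ l <= x <= u.
have HYb : forall y, Y y -> l <= y <= u by move=> y [].
have [m [Hm1 Hm2]] := left_part HYb Hun.
have HY'b : forall y, Y (- y) -> - u <= y <= - l.
  move=> y /HYb. lra.
have HunY' : uncountable_set (fun y => Y (- y)).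
  move=> /cnt_neg' H. exact: Hun H.
have [m' [Hm'1 Hm'2]] := left_part HY'b HunY'.
set M := - m'.
have HM1 : countable_set (fun y => Y y /\ M < y).
  apply: cnt_neg'. apply: (cnt_sub _ Hm'1) => y [Hy Hyl]. rewrite /M in Hyl. split => //; lra.
have HM2 : forall b, b < M -> uncountable_set (fun y => Y y /\ b < y).
  move=> b Hb Hc. apply: (Hm'2 (- b)); first (rewrite /M in Hb; lra).
  have := cnt_neg Hc. apply: cnt_sub => y [Hy Hyb]. split => //; lra.
have HmM : m < M.
  apply: Rnot_le_lt => HMm. apply: Hun.
  apply: (cnt_sub _ (cnt_union Hm1 (cnt_union (cnt_single m) HM1))) => x Hx.
  case: (Rtotal_order x m) => [H|[H|H]]; [left|right;left|right;right] => //; split => //; lra.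
set a := (2 * m + M) / 3. set b := (m + 2 * M) / 3.
have Ua := Hm2 a ltac:(rewrite /a; lra).
have Ub := HM2 b ltac:(rewrite /b; lra).
have [ya [[Hya1 Hya2] Hya3]] : exists y, Y y /\ y < a.
  apply: Classical_Prop.NNPP => Hn. apply: Ua. apply: cnt_empty => y Hy. apply: Hn. by exists y.
have [yb [[Hyb1 Hyb2] Hyb3]] : exists y, Y y /\ b < y.
  apply: Classical_Prop.NNPP => Hn. apply: Ub. apply: cnt_empty => y Hy. apply: Hn. by exists y.
exists a, b. split; first (rewrite /a /b; lra). split; split; try lra.
- move=> Hc. apply: Ua. apply: (cnt_sub _ Hc) => y [[Hy1 Hy2] Hy3]. split => //; lra.
- move=> Hc. apply: Ub. apply: (cnt_sub _ Hc) => y [[Hy1 Hy2] Hy3]. split => //; lra.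
Qed.

Lemma GX_good X : good_split (GX X).
Proof.
move=> [l u] /= HG. have [a [b [Hab [Ha Hb]]]] := GX_sep HG.
have [l1 [u1 [H1 [H2 [H3 H4]]]]] := GX_halve Ha.
have [l2 [u2 [H5 [H6 [H7 H8]]]]] := GX_halve Hb.
exists (l1, u1), (l2, u2). rewrite /split_spec /=.
have := HG. have := Ha. have := Hb. have := H4. have := H8. rewrite /GX.
move=> [? _] [? _] [? _] [? _] [? _].
do 7 (split; first lra). by split.
Qed.

Definition G01 (l u : R) : Prop := l < u.

Lemma G01_good : good_split G01.
Proof.
move=> [l u] /= HG. rewrite /G01 in HG.
exists (l, l + (u - l) / 3), (u - (u - l) / 3, u). rewrite /split_spec /G01 /=.
do 8 (split; first lra). lra.
Qed.

Lemma big01 : exists psi : continuum -> R, (forall a b, psi a = psi b -> a = b) /\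
  forall w, 0 <= psi w <= 1.
Proof.
have H0 : G01 (fst (0,1)) (snd (0,1)) by rewrite /G01 /=; lra.
have Hle : fst (0,1) <= snd (0,1) by rewrite /=; lra.
exists (phiJ G01 (0,1)); split.
- move=> a b. exact: phiJ_inj G01_good H0 Hle a b.
- move=> w. exact: (phiJ_in G01_good H0 Hle w O).
Qed.

Fixpoint dec (c i : nat) : bool :=
  match i with O => Nat.odd c | S i => dec (Nat.div2 c) i end.

Lemma enc_ex n : forall b : continuum, exists c, forall i, (i < n)%nat -> dec c i = b i.
Proof.
elim: n => [|n IH] b; first by exists O => i Hi; lia.
have [c Hc] := IH (fun i => b (S i)).
exists ((if b O then 1 else 0) + 2 * c)%nat => [[|i]] Hi /=.
- rewrite Nat.odd_add_mul_2. by case: (b O).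
- have -> : Nat.div2 ((if b O then 1 else 0) + 2 * c)%nat = c.
    case: (b O) => /=; [exact: Nat.div2_succ_double| exact: Nat.div2_double].
  apply: Hc. lia.
Qed.

Definition goodw (t : nat -> R) (p : R) (u : nat -> R) : Prop :=
  (forall n, exists m, u n = t m) /\ (forall n, 0 <= u n <= 1) /\ Un_cv u p.

Lemma unc_ne (A : R -> Prop) : uncountable_set A -> exists x, A x.
Proof.
move=> H. apply: Classical_Prop.NNPP => Hn. apply: H. apply: cnt_empty => x Hx. apply: Hn. by exists x.
Qed.

Definition ptI (X : R -> Prop) (p : R * R) : R :=
  ClassicalEpsilon.epsilon (inhabits 0) (fun x => X x /\ fst p <= x <= snd p).

Lemma bigX (X : R -> Prop) : (forall x, X x -> 0 <= x <= 1) -> uncountable_set X ->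
  exists (t : nat -> R) (phi : continuum -> R), (forall m, X (t m)) /\
    (forall a b, phi a = phi b -> a = b) /\
    forall w, 0 <= phi w <= 1 /\ exists u, goodw t (phi w) u.
Proof.
move=> HX Hun.
have H0 : GX X (fst (0,1)) (snd (0,1)).
  rewrite /GX /=. split; first lra. move=> Hc. apply: Hun. apply: (cnt_sub _ Hc) => x Hx.
  split => //. exact: HX.
have Hle : fst (0,1) <= snd (0,1) by rewrite /=; lra.
have HG := @GX_good X.
have Hpt : forall n b, X (ptI X (J (GX X) (0,1) n b)) /\
   fst (J (GX X) (0,1) n b) <= ptI X (J (GX X) (0,1) n b) <= snd (J (GX X) (0,1) n b).
  move=> n b. rewrite /ptI.
  apply: (ClassicalEpsilon.epsilon_spec (inhabits 0) (fun x => X x /\ fst _ <= x <= snd _)).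
  have [[_ Hu] _] := J_inv HG H0 Hle n b. exact: unc_ne Hu.
exists (fun m => let (n, c) := Cantor.of_nat m in ptI X (J (GX X) (0,1) n (dec c))).
exists (phiJ (GX X) (0,1)).
split; first by move=> m; case: (Cantor.of_nat m) => n c; exact: (proj1 (Hpt n (dec c))).
split; first by move=> a b; exact: phiJ_inj HG H0 Hle a b.
move=> w. split; first exact: (phiJ_in HG H0 Hle w O).
exists (fun n => ptI X (J (GX X) (0,1) n w)). split; last split.
- move=> n. have [c Hc] := enc_ex n w. exists (Cantor.to_nat (n, c)).
  rewrite Cantor.cancel_of_to. rewrite (J_dep _ _ (b := dec c) (b' := w)) //.
- move=> n. apply: HX. exact: (proj1 (Hpt n w)).
- apply: (phiJ_cv HG H0 Hle) => n. exact: (proj2 (Hpt n w)).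
Qed.

Definition goodp (t : nat -> R) (p : R) : Prop := (0 <= p <= 1) /\ exists u, goodw t p u.

Theorem lemma3p1 :
  exists (s : continuum -> nat -> R) (r : continuum -> R),
    (forall xi n, 0 <= s xi n <= 1) /\
    (forall xi, 0 <= r xi <= 1) /\
    (forall xi eta, xi <> eta -> r xi <> r eta) /\
    (forall xi, Un_cv (s xi) (r xi)) /\
    (forall X : R -> Prop,
        (forall x, X x -> 0 <= x <= 1) ->
        uncountable_set X ->
        exists xi, forall n, X (s xi n)).
Proof.
have [lt [Hwf [Htri Hord]]] := W_ord.
have [psi [Hpsi Hpsi01]] := big01.
pose Q (xi : continuum) (U : R -> Prop) (p : R) :=
  (0 <= p <= 1) /\ ~ U p /\ ((exists p', goodp (Tsk xi) p' /\ ~ U p') -> goodp (Tsk xi) p).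
pose F (xi : continuum) (rec : forall eta, lt eta xi -> R) : R :=
  ClassicalEpsilon.epsilon (inhabits 0) (Q xi (fun q => exists eta (H : lt eta xi), rec eta H = q)).
pose r := Fix Hwf (fun _ => R) F.
have Hr : forall xi, Q xi (fun q => exists eta (H : lt eta xi), r eta = q) (r xi).
  { move=> xi. rewrite /r Fix_eq; last first.
    move=> x f g Hfg. have -> : f = g; last by [].
    apply: functional_extensionality_dep => y. apply: functional_extensionality_dep => p. exact: Hfg.
  rewrite -/r /F.
  apply: (ClassicalEpsilon.epsilon_spec (inhabits 0) (Q xi (fun q => exists eta (H : lt eta xi), r eta = q))).
  case: (Classical_Prop.classic (exists p', goodp (Tsk xi) p' /\
           ~ (exists eta (H : lt eta xi), r eta = p'))) => Hex.
  - have [p' [Hg Hu]] := Hex. exists p'. split; first exact: (proj1 Hg). by split.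
  - have [w Hw] := cover _ Hord xi r psi Hpsi. exists (psi w). split; first exact: Hpsi01.
    split; last by move=> /Hex.
    move=> [eta [H E]]. exact: Hw eta H E. }
pose s (xi : continuum) : nat -> R := ClassicalEpsilon.epsilon (inhabits (fun _ => 0))
  (fun u => (forall n, 0 <= u n <= 1) /\ Un_cv u (r xi) /\
            ((exists u', goodw (Tsk xi) (r xi) u') -> goodw (Tsk xi) (r xi) u)).
have Hs : forall xi, (forall n, 0 <= s xi n <= 1) /\ Un_cv (s xi) (r xi) /\
            ((exists u', goodw (Tsk xi) (r xi) u') -> goodw (Tsk xi) (r xi) (s xi)).
  { move=> xi. rewrite /s.
  apply: (ClassicalEpsilon.epsilon_spec (inhabits (fun _ => 0)) (fun u => (forall n, 0 <= u n <= 1) /\ Un_cv u (r xi) /\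
            ((exists u', goodw (Tsk xi) (r xi) u') -> goodw (Tsk xi) (r xi) u))).
  case: (Classical_Prop.classic (exists u', goodw (Tsk xi) (r xi) u')) => Hex.
  - have [u' Hu'] := Hex. exists u'. split; first exact: (proj1 (proj2 Hu')).
    split; first exact: (proj2 (proj2 Hu')). by [].
  - exists (fun _ => r xi). split; first by move=> n; exact: (proj1 (Hr xi)).
    split; last by move=> /Hex.
    move=> eps Heps. exists O => n _. unfold Rdist. rewrite Rminus_diag Rabs_R0. lra. }
exists s, r. split; first by move=> xi n; exact: (proj1 (Hs xi) n).
split; first by move=> xi; exact: (proj1 (Hr xi)).
split.
{ move=> xi eta Hne E. case: (Htri xi eta) => [H|[H|H]] //.
  - apply: (proj1 (proj2 (Hr eta))). by exists xi, H.
  - apply: (proj1 (proj2 (Hr xi))). by exists eta, H. }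
split; first by move=> xi; exact: (proj1 (proj2 (Hs xi))).
move=> X HX Hun.
have [t [phi [HtX [Hphi Hphig]]]] := bigX HX Hun.
have [xi Hxi] := Tsk_surj t.
have [w Hw] := cover _ Hord xi r phi Hphi.
have Hgood : goodp (Tsk xi) (r xi).
  apply: (proj2 (proj2 (Hr xi))). exists (phi w). split; first by rewrite Hxi; exact: Hphig.
  move=> [eta [H E]]. exact: Hw eta H E.
have [_ [u Hu]] := Hgood.
have [Hsn _] := proj2 (proj2 (Hs xi)) (ex_intro _ u Hu).
exists xi => n. have [m Hm] := Hsn n. rewrite Hm Hxi. exact: HtX.
Qed.
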